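(* Let $n\in\mathbb{N}$, $N=2^{2n}$ and $1\le\kappa\le 2^n$. Any quantum algorithm that makes $T$ queries to $\varphi$ and $\varphi^{-1}$, where $\varphi\sim S_N^{\kappa}$ is a uniformly random permutation of $\{0,1\}^{2n}$ with exactly $\kappa$ zero pairs, and outputs a zero pair of $\varphi$ with probability $\epsilon>0$, satisfies $$\epsilon\le 2(T+1)\sqrt{\frac{\kappa}{2^n}}.$$
   Context: A zero pair of a permutation $\varphi$ of $\{0,1\}^{2n}$ is a pair $(x,y)\in\{0,1\}^n\times\{0,1\}^n$ with $\varphi(x\|0^n)=y\|0^n$; $S_N^{\kappa}$ is the set of permutations of $\{0,1\}^{2n}$ with exactly $\kappa$ zero pairs. Queries are to the unitaries $O_\varphi:|a\rangle|b\rangle\mapsto|a\rangle|b\oplus\varphi(a)\rangle$ and $O_{\varphi^{-1}}:|a\rangle|b\rangle\mapsto|a\rangle|b\oplus\varphi^{-1}(a)\rangle$. *)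

(* Defs.v *)
(* Quantum query model over an arbitrary numeric closed
   field C (e.g. algC, or R[i] for a real closed field R). *)
From HB Require Import structures.
From mathcomp Require Import all_boot all_order all_fingroup all_algebra.
Set Implicit Arguments. Unset Strict Implicit. Unset Printing Implicit Defensive.
Import Order.TTheory GRing.Theory Num.Theory.
Local Open Scope ring_scope.

Definition bits (m : nat) := (m.-tuple bool).

Definition bxor (m : nat) (u v : bits m) : bits m :=
  [tuple addb (tnth u i) (tnth v i) | i < m].

Definition pad0 (n : nat) (x : bits n) : bits (n + n) :=
  cat_tuple x (nseq_tuple n false).

Definition zero_pairs (n : nat) (phi : {perm bits (n + n)})
  : {set bits n * bits n} :=
  [set p | phi (pad0 p.1) == pad0 p.2].

Definition S_kappa (n kappa : nat) : {set {perm bits (n + n)}} :=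
  [set phi | #|zero_pairs phi| == kappa].

(* Basis of the algorithm's Hilbert space: query input register a,
   query output register b (both 2n bits), and workspace 'I_W.+1. *)
Definition basis (n W : nat) := (bits (n + n) * bits (n + n) * 'I_W.+1)%type.

Section Quantum.
Variable C : numClosedFieldType.
Variable S : finType.

Definition state := S -> C.
Definition op := S -> S -> C.

Definition apply (U : op) (v : state) : state :=
  fun s => \sum_(t : S) U s t * v t.

Definition ket (s0 : S) : state := fun s => (s == s0)%:R.

Definition unitary (U : op) : Prop :=
  forall t1 t2 : S, \sum_(s : S) (U s t1)^* * U s t2 = (t1 == t2)%:R.
End Quantum.

(* The standard oracle O_f : |a>|b>|w> -> |a>|b xor f(a)>|w> *)
Definition oracle (C : numClosedFieldType) (n W : nat)
  (f : bits (n + n) -> bits (n + n)) : op C (basis n W) :=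
  fun s' s => ((s'.1.1 == s.1.1) && (s'.1.2 == bxor s.1.2 (f s.1.1))
               && (s'.2 == s.2))%:R.

(* Run of a T-query algorithm: initial state |0^{2n}>|0^{2n}>|0>,
   then U_0, then for k = 0..T-1: the k-th query (to phi if c k = false,
   to phi^-1 if c k = true) followed by U_(k+1). *)
Fixpoint run (C : numClosedFieldType) (n W : nat) (U : nat -> op C (basis n W))
  (c : nat -> bool) (phi : {perm bits (n + n)}) (k : nat) : state C (basis n W) :=
  match k with
  | 0 => apply (U 0%N)
           (@ket C _ ((nseq_tuple (n + n) false, nseq_tuple (n + n) false), ord0))
  | k'.+1 => apply (U k)
           (apply (@oracle C n W (if c k' then fun x => (phi^-1)%g x else fun x => phi x))
                  (run U c phi k'))
  end.

(* probability that measuring the final state in the computational basis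
   and applying the classical post-processing out yields a zero pair *)
Definition success_prob (C : numClosedFieldType) (n W T : nat)
  (U : nat -> op C (basis n W)) (c : nat -> bool)
  (out : basis n W -> bits n * bits n) (phi : {perm bits (n + n)}) : C :=
  \sum_(s : basis n W | out s \in zero_pairs phi) `|run U c phi T s| ^+ 2.

Definition avg_success (C : numClosedFieldType) (n kappa W T : nat)
  (U : nat -> op C (basis n W)) (c : nat -> bool)
  (out : basis n W -> bits n * bits n) : C :=
  (\sum_(phi in S_kappa n kappa) success_prob T U c out phi) / #|S_kappa n kappa|%:R.

(* Main.v *)
Require Import Defs.
From mathcomp Require Import all_boot all_order all_fingroup all_algebra.
From mathcomp Require Import ring zify.
Import Order.TTheory GRing.Theory Num.Theory.
Set Implicit Arguments. Unset Strict Implicit. Unset Printing Implicit Defensive.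

Section Comb.
Variable n : nat.
Local Notation T0 := (bits (n + n)).

Lemma pad0_inj : injective (@pad0 n).
Proof.
move=> x y /(congr1 (fun t : T0 => take n (val t))).
rewrite /pad0 /= !take_size_cat ?size_tuple // => e.
by apply: val_inj.
Qed.

Definition Zs : {set T0} := [set pad0 x | x in [set: bits n]].

Lemma ZsP z : reflect (exists x, z = pad0 x) (z \in Zs).
Proof.
apply: (iffP imsetP) => [[x _ ->]|[x ->]]; by exists x.
Qed.

Lemma pad0_Zs x : pad0 x \in Zs.
Proof. by apply/ZsP; exists x. Qed.

Lemma card_bits m : #|{: bits m}| = 2 ^ m.
Proof. by rewrite card_tuple card_bool. Qed.

Lemma card_Zs : #|Zs| = 2 ^ n.
Proof. by rewrite card_imset ?cardsT ?card_bits //; exact: pad0_inj. Qed.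

Lemma in_zp (phi : {perm T0}) x y : ((x, y) \in zero_pairs phi) = (phi (pad0 x) == pad0 y).
Proof. by rewrite inE. Qed.

Definition Dset (phi : {perm T0}) : {set T0} := [set z in Zs | phi z \in Zs].

Lemma card_zp phi : #|zero_pairs phi| = #|Dset phi|.
Proof.
rewrite -(@card_in_imset _ _ (fun p : bits n * bits n => pad0 p.1)).
  apply: eq_card => z; apply/imsetP/idP => [[[x y]]|].
    by rewrite in_zp inE => /eqP e /= ->; rewrite pad0_Zs e pad0_Zs.
  rewrite inE => /andP[/ZsP[x ->] /ZsP[y e]].
  by exists (x, y) => //; rewrite in_zp e.
move=> [x y] [x' y']; rewrite !in_zp => /eqP e /eqP e' /= ex.
have ex' := pad0_inj ex; subst x'.
by rewrite (pad0_inj (etrans (esym e) e')).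
Qed.


Definition pres (A : {set T0}) (h : {perm T0}) := [forall z, (h z \in A) == (z \in A)].

Lemma presP (A : {set T0}) (h : {perm T0}) : reflect (forall z, (h z \in A) = (z \in A)) (pres A h).
Proof. by apply: (iffP forallP) => H z; [apply/eqP|rewrite H]. Qed.

Lemma presM (A : {set T0}) (g h : {perm T0}) : pres A g -> pres A h -> pres A (g * h)%g.
Proof. by move=> /presP hg /presP hh; apply/presP => z; rewrite permM hh hg. Qed.

Lemma presV (A : {set T0}) (g : {perm T0}) : pres A g -> pres A (g^-1)%g.
Proof.
move=> /presP hg; apply/presP => z.
by rewrite -{2}(permKV g z) hg.
Qed.

Definition Hs : {set {perm T0}} := [set h | pres Zs h].

Lemma Dset_mul (a b phi : {perm T0}) : pres Zs a -> pres Zs b ->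
  #|Dset (b * phi * a)%g| = #|Dset phi|.
Proof.
move=> /presP ha /presP hb.
rewrite -(card_preimset (Dset phi) (@perm_inj _ b)); apply: eq_card => z.
by rewrite !inE !permM ha hb.
Qed.

Lemma Sk_mul kappa (a b phi : {perm T0}) : pres Zs a -> pres Zs b ->
  ((b * phi * a)%g \in S_kappa n kappa) = (phi \in S_kappa n kappa).
Proof. by move=> ha hb; rewrite !inE !card_zp Dset_mul. Qed.


Lemma swap_exists (k : nat) (D W : {set T0}) : #|D| = k -> [disjoint D & W] -> (#|D| <= #|W|)%N ->
  exists s : {perm T0}, [/\ forall x, x \notin D -> x \notin W -> s x = x,
     forall d, d \in D -> s d \in W &
     forall w, w \in W -> s w != w -> s w \in D].
Proof.
elim: k D W => [|k IH] D W hk dDW hDW.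
  exists 1%g; split => [x _ _|d|w _]; rewrite ?perm1 ?eqxx //.
  by move/cards0_eq: hk => ->; rewrite inE.
have /set0Pn[d dD] : D != set0 by rewrite -card_gt0 hk.
have /set0Pn[w wW] : W != set0 by rewrite -card_gt0 (leq_trans _ hDW) // hk.
have dW : d \notin W by rewrite (disjointFr dDW dD).
have wD : w \notin D by rewrite (disjointFl dDW wW).
have hk' : #|D :\ d| = k by move: hk; rewrite (cardsD1 d) dD add1n => -[].
have dDW' : [disjoint D :\ d & W :\ w].
  by apply: disjointWl (subsetDl _ _) _; apply: disjointWr (subsetDl _ _) dDW.
have hDW' : (#|D :\ d| <= #|W :\ w|)%N.
  by move: hDW; rewrite (cardsD1 d D) (cardsD1 w W) dD wW !add1n ltnS.
have [s' [s1 s2 s3]] := IH _ _ hk' dDW' hDW'.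
have s'd : s' d = d by apply: s1; rewrite !inE ?eqxx ?(negbTE dW) ?andbF.
have s'w : s' w = w by apply: s1; rewrite !inE ?eqxx ?(negbTE wD) ?andbF.
exists (s' * tperm d w)%g; split.
- move=> x xD xW; rewrite permM s1; last 2 first.
  + by rewrite !inE (negbTE xD) andbF.
  + by rewrite !inE (negbTE xW) andbF.
  apply: tpermD; [by apply: contraNneq xD => <- | by apply: contraNneq xW => <-].
- move=> d' d'D; rewrite permM; case: (eqVneq d' d) => [->|ne].
    by rewrite s'd tpermL.
  have : s' d' \in W :\ w by apply: s2; rewrite !inE ne.
  rewrite !inE => /andP[nw sW]; rewrite tpermD //; last by rewrite eq_sym.
  by apply: contraNneq dW => ->.
- move=> w' w'W; rewrite permM; case: (eqVneq w' w) => [->|ne].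
    by rewrite s'w tpermR.
  have w'W' : w' \in W :\ w by rewrite !inE ne.
  case: (eqVneq (s' w') w') => [e|ne'].
    rewrite e tpermD ?eqxx //; last by rewrite eq_sym.
    by apply: contraNneq dW => ->.
  have : s' w' \in D :\ d by apply: s3.
  rewrite !inE => /andP[nd sD]; rewrite tpermD //; first by rewrite eq_sym.
  by apply: contraNneq wD => ->.
Qed.


Lemma decomp (phi0 : {perm T0}) : (0 < n)%N ->
  exists s0 : {perm T0}, exists E : {set T0},
  [/\ forall z, z \in Zs -> (s0 * phi0)%g z \notin Zs,
      forall x, s0 x != x -> (x \in Dset phi0) || (x \in E),
      forall x, x \in E -> (s0 * phi0)%g x \in Zs &
      (#|E| <= #|Dset phi0|)%N].
Proof.
move=> n0.
set D := Dset phi0.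
set Wset := [set u | (u \notin Zs) && (phi0 u \notin Zs)].
set P := [set u | phi0 u \in Zs].
have dDW : [disjoint D & Wset].
  by rewrite -setI_eq0; apply/eqP/setP => x; rewrite !inE; case: (x \in Zs); rewrite ?andbF.
have hW : #|Wset| = #|~: (Zs :|: P)| by apply: eq_card => x; rewrite !inE negb_or.
have hP : #|P| = #|Zs|.
  by rewrite -(card_preimset Zs (@perm_inj _ phi0)); apply: eq_card => x; rewrite !inE.
have hD : #|Zs :&: P| = #|D| by apply: eq_card => x; rewrite !inE.
have hU := cardsU Zs P.
have hC := cardsC (Zs :|: P).
rewrite card_Zs in hP hU.
have h2 : (2 <= 2 ^ n)%N by rewrite -{1}(expn1 2) leq_exp2l.
have hT : #|{: T0}| = 2 ^ n * 2 ^ n by rewrite card_bits expnD.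
rewrite hT in hC.
have hI : (#|Zs :&: P| <= 2 ^ n)%N by rewrite -card_Zs subset_leq_card // subsetIl.
have hDW : (#|D| <= #|Wset|)%N by rewrite hW; nia.
have [s [s1 s2 s3]] := swap_exists (erefl _) dDW hDW.
exists s, [set w in Wset | s w != w]; split.
- move=> z zZ; rewrite permM.
  case: (boolP (z \in D)) => zD.
    by have := s2 _ zD; rewrite !inE => /andP[].
  rewrite s1 //; last by rewrite !inE zZ.
  by move: zD; rewrite !inE zZ.
- move=> x; apply: contraR; rewrite negb_or => /andP[xD xE].
  case: (boolP (x \in Wset)) => xW; last by rewrite s1.
  by move: xE; rewrite inE xW /= negbK.
- move=> x; rewrite inE => /andP[xW sx]; rewrite permM.
  by have := s3 _ xW sx; rewrite inE => /andP[].
- rewrite -(card_imset _ (@perm_inj _ s)); apply: subset_leq_card.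
  apply/subsetP => y /imsetP[x]; rewrite inE => /andP[xW sx] ->.
  exact: s3.
Qed.


Definition Lset (A1 A2 : {set T0}) : {set {perm T0}} := [set g | pres A1 g && pres A2 g].

Lemma pres_tperm (A : {set T0}) b c : (b \in A) = (c \in A) -> pres A (tperm b c).
Proof.
move=> e; apply/presP => z; case: (tpermP b c z) => [->|->|]//; by rewrite e.
Qed.

Lemma unif (A1 A2 : {set T0}) b (A : {set T0}) : [disjoint A1 & A2] -> b \in A1 ->
  A \subset A1 ->
  (#|[set g in Lset A1 A2 | g b \in A]| * #|A1| = #|A| * #|Lset A1 A2|)%N.
Proof.
move=> dA bA1 sA.
set L := Lset A1 A2.
pose N c := #|[set g in L | g b == c]|.
have hN : forall c, c \in A1 -> N c = N b.
  move=> c cA1; rewrite /N; set t := tperm b c.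
  have tL : t \in L.
    rewrite inE pres_tperm ?bA1 ?cA1 //= pres_tperm //.
    by rewrite (disjointFr dA bA1) (disjointFr dA cA1).
  have -> : [set g in L | g b == c] = (fun g => g * t)%g @: [set g in L | g b == b].
    apply/setP => g; rewrite inE; apply/andP/imsetP => [[gL /eqP gb]|[h]].
      exists (g * t)%g; last by rewrite -mulgA tperm2 mulg1.
      by rewrite inE permM gb tpermR eqxx andbT; move: gL tL; rewrite !inE => /andP[? ?] /andP[? ?]; apply/andP; split; apply: presM.
    rewrite inE => /andP[hL /eqP hb] ->; rewrite permM hb tpermL eqxx; split => //.
    by move: hL tL; rewrite !inE => /andP[? ?] /andP[? ?]; apply/andP; split; apply: presM.
  by rewrite card_imset //; apply: mulIg.
have part : forall A' : {set T0}, A' \subset A1 ->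
    #|[set g in L | g b \in A']| = (#|A'| * N b)%N.
  move=> A' sA'.
  rewrite -sum1_card (partition_big (fun g : {perm T0} => g b) (mem A')) /=; last first.
    by move=> g; rewrite inE => /andP[].
  rewrite -sum_nat_const; apply: eq_bigr => c cA'.
  rewrite -(hN c (subsetP sA' _ cA')) /N -sum1_card; apply: eq_bigl => g.
  rewrite !inE; case: (eqVneq (g b) c) => [->|]; rewrite ?cA' ?andbT ?andbF //.
have hL : #|L| = (#|A1| * N b)%N.
  rewrite -part ?subxx //; apply: eq_card => g; rewrite !inE.
  by case: (boolP (pres A1 g)) => //= /presP ->; rewrite bA1 andbT.
by rewrite (part A sA) hL mulnAC mulnA.
Qed.


Lemma LsetC (A1 A2 : {set T0}) : Lset A1 A2 = Lset A2 A1.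
Proof. by apply/setP => g; rewrite !inE andbC. Qed.

Lemma count_supp (s0 : {perm T0}) (D E V : {set T0}) b :
  [disjoint Zs & V] -> D \subset Zs -> E \subset V -> #|V| = 2 ^ n ->
  (forall x, s0 x != x -> (x \in D) || (x \in E)) -> (#|E| <= #|D|)%N ->
  (#|[set g in Lset Zs V | s0 (g b) != g b]| * 2 ^ n <= #|D| * #|Lset Zs V|)%N.
Proof.
move=> dZV sD sE cV hs hED.
have gpres : forall g, g \in Lset Zs V -> (forall z, (g z \in Zs) = (z \in Zs)) /\
                                      (forall z, (g z \in V) = (z \in V)).
  by move=> g; rewrite inE => /andP[/presP ? /presP ?].
case: (boolP (b \in Zs)) => bZ.
  rewrite -card_Zs -(unif dZV bZ sD) leq_mul2r; apply/orP; right.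
  apply: subset_leq_card; apply/subsetP => g; rewrite inE => /andP[gL hg].
  rewrite inE gL /=; have := hs _ hg; case/orP => // gE.
  have [g1 _] := gpres g gL.
  have gbZ : g b \in Zs by rewrite g1.
  by have := disjointFr dZV gbZ; rewrite (subsetP sE _ gE).
case: (boolP (b \in V)) => bV.
  rewrite -cV (LsetC Zs V).
  have dVZ : [disjoint V & Zs] by rewrite disjoint_sym.
  apply: (@leq_trans (#|E| * #|Lset V Zs|)); last by rewrite leq_mul2r hED orbT.
  rewrite -(unif dVZ bV sE) leq_mul2r; apply/orP; right.
  apply: subset_leq_card; apply/subsetP => g; rewrite inE => /andP[gL hg].
  rewrite inE gL /=; have := hs _ hg; case/orP => // gD.
  move: gL; rewrite -LsetC => gL; have [g1 g2] := gpres g gL.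
  by move: (subsetP sD _ gD); rewrite g1 (negbTE bZ).
rewrite (_ : [set g in Lset Zs V | s0 (g b) != g b] = set0) ?cards0 //.
apply/setP => g; rewrite inE in_set0; apply/negbTE; rewrite negb_and negbK.
case: (boolP (g \in Lset Zs V)) => //= gL.
have [g1 g2] := gpres g gL.
apply/negPn/negP => /hs /orP[/(subsetP sD)|/(subsetP sE)]; by rewrite ?g1 ?g2 ?(negbTE bZ) ?(negbTE bV).
Qed.

End Comb.

Local Open Scope ring_scope.

Section Analysis.
Variable C : numClosedFieldType.
Variable I : finType.

Lemma split3 (F G H : I -> I -> C) : \sum_i \sum_j (F i j + G i j - H i j) =
  \sum_i\sum_j F i j + \sum_i\sum_j G i j - \sum_i \sum_j H i j.
Proof.
rewrite -big_split -sumrB /=; apply: eq_bigr => i _; by rewrite -big_split -sumrB.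
Qed.

Lemma CS (x y : I -> C) : (forall i, x i \is Num.real) -> (forall i, y i \is Num.real) ->
  (\sum_i x i * y i) ^+ 2 <= (\sum_i x i ^+ 2) * (\sum_i y i ^+ 2).
Proof.
move=> xr yr.
have key : \sum_i \sum_j (x i * y j - x j * y i) ^+ 2 =
   2 * ((\sum_i x i ^+ 2) * (\sum_i y i ^+ 2) - (\sum_i x i * y i) ^+ 2).
  transitivity (\sum_i \sum_j (x i ^+2 * y j ^+2 + x j ^+2 * y i ^+2
                 - 2 * (x i * y i * (x j * y j)))).
    by apply: eq_bigr => i _; apply: eq_bigr => j _; ring.
  rewrite split3 big_distrlr expr2 big_distrlr /=.
  rewrite [\sum_i \sum_j x j ^+ 2 * _]exchange_big /=.
  have -> : \sum_i \sum_j 2 * (x i * y i * (x j * y j)) =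
            2 * \sum_i \sum_j (x i * y i * (x j * y j)).
    rewrite mulr_sumr; apply: eq_bigr => i _; by rewrite mulr_sumr.
  ring.
have : 0 <= \sum_i \sum_j (x i * y j - x j * y i) ^+ 2.
  apply: sumr_ge0 => i _; apply: sumr_ge0 => j _.
  by rewrite -realEsqr rpredB ?rpredM.
by rewrite key pmulr_rge0 // subr_ge0.
Qed.
Definition nsq (v : I -> C) := \sum_i `|v i| ^+ 2.
Definition nrm (v : I -> C) := sqrtC (nsq v).

Lemma nsq_ge0 v : 0 <= nsq v.
Proof. by apply: sumr_ge0 => i _; rewrite exprn_ge0. Qed.

Lemma nrm_ge0 v : 0 <= nrm v.
Proof. by rewrite sqrtC_ge0 nsq_ge0. Qed.

Lemma nrm_sqr v : nrm v ^+ 2 = nsq v.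
Proof. exact: sqrtCK. Qed.

Lemma CSnn (x y : I -> C) : (forall i, 0 <= x i) -> (forall i, 0 <= y i) ->
  \sum_i x i * y i <= sqrtC (\sum_i x i ^+ 2) * sqrtC (\sum_i y i ^+ 2).
Proof.
move=> x0 y0.
have h := CS (fun i => ger0_real (x0 i)) (fun i => ger0_real (y0 i)).
rewrite -(ler_pXn2r (n:=2)) ?nnegrE //; last first.
- by rewrite mulr_ge0 // sqrtC_ge0 sumr_ge0 // => i _; rewrite exprn_ge0.
- by rewrite sumr_ge0 // => i _; rewrite mulr_ge0.
by rewrite exprMn !sqrtCK.
Qed.

Lemma nrm_add u v : nrm (fun i => u i + v i) <= nrm u + nrm v.
Proof.
rewrite /nrm -(ler_pXn2r (n:=2)) ?nnegrE ?sqrtC_ge0 ?nsq_ge0 ?addr_ge0 ?nrm_ge0 //.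
rewrite sqrtCK sqrrD !sqrtCK.
apply: (le_trans (y := \sum_i (`|u i| + `|v i|) ^+ 2)).
  apply: ler_sum => i _.
  by rewrite ler_pXn2r ?nnegrE ?addr_ge0 // ler_normD.
under eq_bigr => i _ do rewrite sqrrD.
rewrite big_split big_split /= -/(nsq u) -/(nsq v).
rewrite lerD2r lerD2l sumrMnl lerMn2r /=.
by apply: CSnn => i; rewrite normr_ge0.
Qed.

Lemma nrm_le u v : (forall i, `|u i| <= `|v i|) -> nrm u <= nrm v.
Proof.
move=> h; rewrite ler_sqrtC ?nnegrE ?nsq_ge0 //; apply: ler_sum => i _.
by rewrite ler_pXn2r ?nnegrE.
Qed.

Lemma nrm_eq u v : (forall i, `|u i| = `|v i|) -> nrm u = nrm v.
Proof. by move=> h; rewrite /nrm /nsq; congr sqrtC; apply: eq_bigr => i _; rewrite h. Qed.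

Lemma nrm_sub u v : nrm (fun i => u i - v i) <= nrm u + nrm v.
Proof.
apply: le_trans (nrm_add _ _) _.
by rewrite (@nrm_eq (fun i => - v i) v) // => i; rewrite normrN.
Qed.

Lemma jensen (P : pred I) (x : I -> C) (c : C) : (forall i, 0 <= x i) -> 0 <= c ->
  \sum_(i | P i) x i ^+ 2 <= #|P|%:R * c ^+ 2 -> \sum_(i | P i) x i <= #|P|%:R * c.
Proof.
move=> x0 c0 h.
have e1 : \sum_(i | P i) x i = \sum_i (if P i then x i else 0) * (P i)%:R.
  by rewrite big_mkcond /=; apply: eq_big => [//|i]; case: (P i); rewrite ?mulr1 ?mulr0.
have e2 : \sum_i ((P i)%:R : C) ^+ 2 = #|P|%:R.
  rewrite -sum1_card natr_sum [RHS]big_mkcond /=; apply: eq_big => [//|i].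
  move=> _; have -> : (i \in P) = P i by []. by case: (P i); rewrite ?expr1n ?expr0n.
have e3 : \sum_i (if P i then x i else 0) ^+ 2 = \sum_(i | P i) x i ^+ 2.
  rewrite [RHS]big_mkcond /=; apply: eq_big => [//|i _]; by case: (P i); rewrite ?expr0n.
rewrite e1; apply: le_trans (CSnn _ _) _.
- by move=> i; case: (P i).
- by move=> i; case: (P i).
rewrite e2 e3.
have hP : (0 : C) <= #|P|%:R by rewrite ler0n.
apply: (le_trans (y := sqrtC (#|P|%:R * c ^+ 2) * sqrtC #|P|%:R)).
  rewrite ler_wpM2r ?sqrtC_ge0 //.
  by rewrite ler_sqrtC ?nnegrE ?mulr_ge0 ?exprn_ge0 // sumr_ge0 // => i _; rewrite exprn_ge0.
rewrite -sqrtCM ?nnegrE ?mulr_ge0 ?exprn_ge0 //.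
rewrite mulrAC -expr2 sqrtCM ?nnegrE ?exprn_ge0 // !sqrCK //.
Qed.
End Analysis.

Lemma bxorK m (u v : bits m) : bxor (bxor u v) v = u.
Proof.
apply: eq_from_tnth => i; rewrite /bxor !tnth_mktuple.
by rewrite -addbA addbb addbF.
Qed.

Section Q.
Variable C : numClosedFieldType.

Lemma sum_delta (S : finType) (a : S -> C) t : \sum_t' ((t == t')%:R * a t') = a t.
Proof.
rewrite (bigD1 t) //= eqxx mul1r big1 ?addr0 // => t' /negbTE.
by rewrite eq_sym => ->; rewrite mul0r.
Qed.

Lemma unitary_nsq (S : finType) (U : op C S) (v : state C S) :
  unitary U -> nsq (apply U v) = nsq v.
Proof.
move=> hU; rewrite /nsq /apply.
transitivity (\sum_s \sum_t \sum_t' ((v t)^* * v t' * ((U s t)^* * U s t'))).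
  apply: eq_bigr => s _; rewrite normCKC rmorph_sum big_distrlr /=.
  apply: eq_bigr => t _; apply: eq_bigr => t' _; rewrite rmorphM /=; ring.
rewrite exchange_big /=.
apply: eq_bigr => t _; rewrite exchange_big /=.
under eq_bigr => t' _ do rewrite -mulr_sumr hU.
rewrite normCKC -(sum_delta (fun t' => (v t)^* * v t') t).
by apply: eq_bigr => t' _; rewrite mulrC.
Qed.

Variables (n W : nat).
Local Notation S := (basis n W).
Local Notation T0 := (bits (n + n)).

Definition opi (f : T0 -> T0) (s : S) : S := ((s.1.1, bxor s.1.2 (f s.1.1)), s.2).

Lemma opiK f : involutive (opi f).
Proof. by move=> [[a b] w]; rewrite /opi /= bxorK. Qed.

Lemma apply_oracle f (v : state C S) s : apply (@oracle C n W f) v s = v (opi f s).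
Proof.
rewrite /apply /oracle (bigD1 (opi f s)) //= bxorK !eqxx /= mul1r big1 ?addr0 //.
move=> [[a b] w] /= hne.
have -> : ((s.1.1 == a) && (s.1.2 == bxor b (f a)) && (s.2 == w)) = false.
  apply/negbTE/negP => /andP[/andP[/eqP ha /eqP hb] /eqP hw]; case/negP: hne; apply/eqP.
  by rewrite /opi /= hb ha bxorK hw.
by rewrite mul0r.
Qed.

Lemma oracle_nsq f (v : state C S) : nsq (apply (@oracle C n W f) v) = nsq v.
Proof.
rewrite /nsq; under eq_bigr => s _ do rewrite apply_oracle.
by rewrite (reindex_inj (inv_inj (opiK f))) /=; apply: eq_bigr => s _; rewrite opiK.
Qed.


Definition proj (P : S -> bool) (v : state C S) : state C S :=
  fun s => if P s then v s else 0.

Lemma nrm_oracle f (v : state C S) : nrm (apply (@oracle C n W f) v) = nrm v.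
Proof. by rewrite /nrm oracle_nsq. Qed.

Lemma nrm_unitary (U : op C S) (v : state C S) : unitary U -> nrm (apply U v) = nrm v.
Proof. by move=> hU; rewrite /nrm unitary_nsq. Qed.

Lemma oracle_diff f f' (v : state C S) :
  nrm (fun s => apply (@oracle C n W f) v s - apply (@oracle C n W f') v s)
  <= 2 * nrm (proj (fun s => f s.1.1 != f' s.1.1) v).
Proof.
have -> : nrm (fun s => apply (@oracle C n W f) v s - apply (@oracle C n W f') v s) =
  nrm (fun s => apply (@oracle C n W f) (proj (fun s => f s.1.1 != f' s.1.1) v) s -
                apply (@oracle C n W f') (proj (fun s => f s.1.1 != f' s.1.1) v) s).
  apply: nrm_eq => s; rewrite !apply_oracle /proj /opi /=.
  case: eqP => [->|] //; by rewrite !subrr.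
apply: le_trans (nrm_sub _ _) _.
by rewrite !nrm_oracle mulr_natl mulr2n.
Qed.

Lemma apply_sub (U : op C S) (a b : state C S) s :
  apply U a s - apply U b s = apply U (fun t => a t - b t) s.
Proof. by rewrite /apply -sumrB; apply: eq_bigr => t _; rewrite mulrBr. Qed.

Lemma nrm_subrr (a : state C S) : nrm (fun s => a s - a s) = 0.
Proof.
rewrite /nrm /nsq big1 ?sqrtC0 // => s _; by rewrite subrr normr0 expr0n.
Qed.

Definition fq (c : nat -> bool) (phi : {perm T0}) (j : nat) : T0 -> T0 :=
  if c j then fun x => (phi^-1)%g x else fun x => phi x.

Lemma run_S (U : nat -> op C S) c phi k :
  run U c phi k.+1 = apply (U k.+1) (apply (@oracle C n W (fq c phi k)) (run U c phi k)).
Proof. by []. Qed.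

Lemma nsq_ket s0 : nsq (@ket C S s0) = 1.
Proof.
rewrite /nsq (bigD1 s0) //= /ket eqxx normr1 expr1n big1 ?addr0 // => s /negbTE ->.
by rewrite normr0 expr0n.
Qed.

Lemma run_nsq (U : nat -> op C S) c phi k :
  (forall i, (i <= k)%N -> unitary (U i)) -> nsq (run U c phi k) = 1.
Proof.
elim: k => [|k IH] hU /=.
  by rewrite unitary_nsq ?nsq_ket //; apply: hU.
rewrite unitary_nsq ?oracle_nsq ?IH //; last exact: hU.
by move=> i hi; apply: hU; rewrite (leq_trans hi).
Qed.

Lemma run_nrm (U : nat -> op C S) c phi k :
  (forall i, (i <= k)%N -> unitary (U i)) -> nrm (run U c phi k) = 1.
Proof. by move=> h; rewrite /nrm run_nsq // sqrtC1. Qed.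

Definition dproj c phi phi' j (v : state C S) :=
  proj (fun s => fq c phi j s.1.1 != fq c phi' j s.1.1) v.

Lemma hybrid (U : nat -> op C S) c phi phi' k :
  (forall i, (i <= k)%N -> unitary (U i)) ->
  nrm (fun s => run U c phi k s - run U c phi' k s) <=
  2 * \sum_(j < k) nrm (dproj c phi phi' j (run U c phi' j)).
Proof.
elim: k => [|k IH] hU.
  by rewrite nrm_subrr big_ord0 mulr0.
have hU' : forall i, (i <= k)%N -> unitary (U i).
  by move=> i hi; apply: hU; rewrite (leq_trans hi).
rewrite !run_S (nrm_eq (v := apply (U k.+1) (fun t =>
   apply (@oracle C n W (fq c phi k)) (fun s => run U c phi k s - run U c phi' k s) t +
   (apply (@oracle C n W (fq c phi k)) (run U c phi' k) t -
    apply (@oracle C n W (fq c phi' k)) (run U c phi' k) t)))); last first.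
  move=> s; rewrite apply_sub; congr `|_|; apply: eq_bigr => t _; congr (_ * _).
  by rewrite !apply_oracle addrA subrK.
rewrite nrm_unitary; last exact: hU.
apply: le_trans (nrm_add _ _) _.
rewrite big_ord_recr /= mulrDr nrm_oracle; apply: lerD; first exact: IH.
exact: oracle_diff.
Qed.

Lemma succ_bound (U : nat -> op C S) c out phi phi' T :
  (forall i, (i <= T)%N -> unitary (U i)) ->
  success_prob T U c out phi <=
  nrm (proj (fun s => out s \in zero_pairs phi) (run U c phi' T)) +
  nrm (fun s => run U c phi T s - run U c phi' T s).
Proof.
move=> hU.
set P := fun s => out s \in zero_pairs phi.
have e : success_prob T U c out phi = nsq (proj P (run U c phi T)).
  rewrite /success_prob /nsq /proj big_mkcond /=; apply: eq_big => [//|s _].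
  by rewrite /P; case: (out s \in zero_pairs phi); rewrite ?normr0 ?expr0n.
have x1 : nrm (proj P (run U c phi T)) <= 1.
  rewrite -(run_nrm c phi hU); apply: nrm_le => s; rewrite /proj.
  by case: ifP; rewrite ?normr0 ?normr_ge0.
have x0 := nrm_ge0 (proj P (run U c phi T)).
rewrite e -nrm_sqr expr2.
apply: (le_trans (y := nrm (proj P (run U c phi T)))).
  by rewrite -[X in _ <= X]mulr1 ler_wpM2l.
apply: (le_trans (y := nrm (proj P (run U c phi' T)) +
   nrm (fun s => proj P (run U c phi T) s - proj P (run U c phi' T) s))).
  apply: le_trans (nrm_add _ _); rewrite le_eqVlt; apply/orP; left; apply/eqP.
  by apply: nrm_eq => s; rewrite addrC subrK.
rewrite lerD2l; apply: nrm_le => s; rewrite /proj.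
by case: ifP; rewrite ?subrr ?normr0 ?normr_ge0.
Qed.

End Q.

Section Avg.
Variable C : numClosedFieldType.
Variables (n W : nat).
Local Notation S := (basis n W).
Local Notation T0 := (bits (n + n)).
Variable G : finType.

Lemma proj_avg (L : pred G) (Q : G -> S -> bool) (v : state C S) (p : C) :
  nsq v = 1 -> 0 <= p ->
  (forall s, (#|[pred g | L g && Q g s]|%:R : C) <= p * #|L|%:R) ->
  \sum_(g | L g) nrm (proj (Q g) v) <= #|L|%:R * sqrtC p.
Proof.
move=> hv p0 hQ.
apply: jensen => [g||]; first exact: nrm_ge0.
  by rewrite sqrtC_ge0.
rewrite sqrtCK.
under eq_bigr => g _ do rewrite nrm_sqr.
rewrite /nsq /proj exchange_big /=.
apply: (le_trans (y := \sum_s `|v s| ^+ 2 * (p * #|L|%:R))); last first.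
  by rewrite -mulr_suml -/(nsq v) hv mul1r mulrC.
apply: ler_sum => s _.
have -> : \sum_(g | L g) `|if Q g s then v s else 0| ^+ 2 =
          `|v s| ^+ 2 * #|[pred g | L g && Q g s]|%:R.
  rewrite -sum1_card natr_sum mulr_sumr big_mkcondr /=.
  rewrite [RHS]big_mkcond [LHS]big_mkcond /=; apply: eq_big => [//|g _].
  case: (L g) => //=; case: (Q g s) => /=; by rewrite ?mulr1 ?normr0 ?expr0n.
apply: ler_wpM2l; [by rewrite exprn_ge0 | exact: hQ].
Qed.


Lemma avg_main (U : nat -> op C S) c out (phi : G -> {perm T0}) (phi' : {perm T0})
  (L : pred G) T (p : C) :
  (forall i, (i <= T)%N -> unitary (U i)) -> 0 <= p ->
  (forall j a, (#|[pred g | L g && (fq c (phi g) j a != fq c phi' j a)]|%:R : C)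
                 <= p * #|L|%:R) ->
  (forall xy, (#|[pred g | L g && (xy \in zero_pairs (phi g))]|%:R : C) <= p * #|L|%:R) ->
  \sum_(g | L g) success_prob T U c out (phi g) <=
     #|L|%:R * sqrtC p * (2 * T%:R + 1).
Proof.
move=> hU p0 hD hZ.
apply: (le_trans (y := \sum_(g | L g)
    (nrm (proj (fun s => out s \in zero_pairs (phi g)) (run U c phi' T)) +
     2 * \sum_(j < T) nrm (dproj c (phi g) phi' j (run U c phi' j))))).
  apply: ler_sum => g _; apply: le_trans (succ_bound _ _ _ phi' hU) _.
  by rewrite lerD2l; apply: hybrid.
rewrite big_split /= -mulr_sumr exchange_big /=.
rewrite mulrDr mulr1 [X in _ <= X]addrC; apply: lerD.
  by apply: proj_avg => //; exact: run_nsq.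
have -> : #|L|%:R * sqrtC p * (2 * T%:R) = 2 * \sum_(j < T) (#|L|%:R * sqrtC p).
  by rewrite sumr_const card_ord -mulr_natr; ring.
apply: ler_wpM2l => //; apply: ler_sum => j _.
apply: proj_avg => //; first apply: run_nsq.
  by move=> i hi; apply: hU; rewrite (leq_trans hi) // ltnW.

Qed.
End Avg.

Section Main.
Variable C : numClosedFieldType.
Variables (n W : nat).
Local Notation S := (basis n W).
Local Notation T0 := (bits (n + n)).

Lemma Hs_mulr (h x : {perm T0}) : h \in Hs n -> ((x * h)%g \in Hs n) = (x \in Hs n).
Proof.
rewrite !inE => hh; apply/idP/idP => hx; last exact: presM.
by rewrite -(mulgK h x); apply: presM => //; apply: presV.
Qed.

Lemma Hs_mull (h x : {perm T0}) : h \in Hs n -> ((h * x)%g \in Hs n) = (x \in Hs n).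
Proof.
rewrite !inE => hh; apply/idP/idP => hx; last exact: presM.
by rewrite -(mulKg h x); apply: presM => //; apply: presV.
Qed.

Lemma reindex_r (F : {perm T0} -> C) h : h \in Hs n ->
  \sum_(x in Hs n) F x = \sum_(x in Hs n) F (x * h)%g.
Proof.
move=> hh; rewrite (reindex_inj (mulIg h)) /=.
by apply: eq_bigl => x; rewrite Hs_mulr.
Qed.

Lemma reindex_l (F : {perm T0} -> C) h : h \in Hs n ->
  \sum_(x in Hs n) F x = \sum_(x in Hs n) F (h * x)%g.
Proof.
move=> hh; rewrite (reindex_inj (mulgI h)) /=.
by apply: eq_bigl => x; rewrite Hs_mull.
Qed.


Lemma nat_ratio (N d k l : nat) : (N * d <= k * l)%N -> (0 < d)%N ->
  (N%:R : C) <= k%:R / d%:R * l%:R.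
Proof.
move=> h d0.
have d0' : (0 : C) < d%:R by rewrite ltr0n.
rewrite mulrAC ler_pdivlMr // -!natrM ler_nat.
by [].
Qed.

Lemma fixed_bound (U : nat -> op C S) c out T (phi0 : {perm T0}) :
  (0 < n)%N -> (forall i, (i <= T)%N -> unitary (U i)) ->
  \sum_(a in Hs n) \sum_(b in Hs n) success_prob T U c out (b * phi0 * a)%g
   <= (#|Hs n| * #|Hs n|)%:R *
      (sqrtC (#|Dset phi0|%:R / (2 ^ n)%:R) * (2 * T%:R + 1)).
Proof.
move=> n0 hU.
have [s0 [E [h1 h2 h3 hE]]] := decomp phi0 n0.
set k := #|Dset phi0|.
set phi1 := (s0 * phi0)%g.
set V := [set v | phi1 v \in Zs n].
set L := Lset (Zs n) V.
set p : C := k%:R / (2 ^ n)%:R.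
have p0 : 0 <= p by rewrite divr_ge0 ?ler0n.
have dZV : [disjoint Zs n & V].
  rewrite -setI_eq0; apply/eqP/setP => z; rewrite !inE.
  by case: (boolP (z \in Zs n)) => //= zZ; rewrite (negbTE (h1 z zZ)).
have cV : #|V| = (2 ^ n)%N.
  rewrite -(card_Zs n) -(card_preimset (Zs n) (@perm_inj _ phi1)).
  by apply: eq_card => z; rewrite !inE.
have sD : Dset phi0 \subset Zs n by apply/subsetP => z; rewrite inE => /andP[].
have sE : E \subset V by apply/subsetP => z /h3; rewrite inE.
have hcount := fun b => count_supp b dZV sD sE cV h2 hE.
have gpres : forall g, g \in L -> (forall z, (g z \in Zs n) = (z \in Zs n)) /\
                                 (forall z, (g z \in V) = (z \in V)).
  by move=> g; rewrite inE => /andP[/presP ? /presP ?].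
have gH : forall g, g \in L -> g \in Hs n.
  by move=> g; rewrite !inE => /andP[].
have g2H : forall g, g \in L -> (phi1^-1 * g * phi1)%g \in Hs n.
  move=> g /gpres[_ g2]; rewrite inE; apply/presP => z; rewrite !permM.
  have e : forall w, (phi0 (s0 w) \in Zs n) = (w \in V) by move=> w; rewrite inE /phi1 permM.
  by rewrite e g2 inE permKV.
pose sg g := (g * s0^-1 * g^-1)%g.
have dec : forall g, (g * phi0)%g = (sg g * phi1 * (phi1^-1 * g * phi1))%g.
  move=> g; apply/permP => x; rewrite /sg !permM.
  have e1 : forall y, phi0 (s0 y) = phi1 y by move=> y; rewrite /phi1 permM.
  by rewrite !e1 permK permKV -e1 permKV.
have step : forall g, g \in L ->
  \sum_(a in Hs n) \sum_(b in Hs n) success_prob T U c out (b * phi0 * a)%g =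
  \sum_(a in Hs n) \sum_(b in Hs n) success_prob T U c out (b * sg g * phi1 * a)%g.
  move=> g gL.
  transitivity (\sum_(a in Hs n) \sum_(b in Hs n)
       success_prob T U c out (b * sg g * phi1 * ((phi1^-1 * g * phi1) * a))%g).
    apply: eq_bigr => a _.
    rewrite (reindex_r (fun b => success_prob T U c out (b * phi0 * a)%g) (gH g gL)).
    by apply: eq_bigr => b _; rewrite -(mulgA b g) dec !mulgA.
  rewrite exchange_big [RHS]exchange_big /=; apply: eq_bigr => b _.
  by rewrite [RHS](reindex_l _ (g2H g gL)).
have L1 : (0 < #|L|)%N.
  rewrite card_gt0; apply/set0Pn; exists 1%g; rewrite inE.
  by apply/andP; split; apply/presP => z; rewrite perm1.
have key : forall (a b g : {perm T0}) (x : T0), s0 (g (b x)) = g (b x) ->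
    (b * sg g * phi1 * a)%g x = (b * phi1 * a)%g x.
  move=> a b g x e; rewrite !permM /sg.
  have e' : (s0^-1)%g (g (b x)) = g (b x) by rewrite -{1}e permK.
  by rewrite e' permK.
have cnt : forall bb, (#|[set g in L | s0 (g bb) != g bb]|%:R : C) <= p * #|L|%:R.
  move=> bb; apply: nat_ratio; last by rewrite expn_gt0.
  exact: hcount.
have main : forall a b, a \in Hs n -> b \in Hs n -> \sum_(g in L) success_prob T U c out (b * sg g * phi1 * a)%g
                       <= #|L|%:R * sqrtC p * (2 * T%:R + 1).
  move=> a b; rewrite !inE => /presP aH /presP bH.
  have := @avg_main C n W _ U c out (fun g => b * sg g * phi1 * a)%g (b * phi1 * a)%g
            (fun g => g \in L) T p hU p0.
  have eL : #|(fun g => g \in L)| = #|L| by apply: eq_card.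
  rewrite eL; apply.
  - move=> j a'; apply: le_trans (cnt (if c j then b ((b * phi1 * a)^-1%g a') else b a')).
    rewrite ler_nat; apply: subset_leq_card; apply/subsetP => g; rewrite !inE.
    case/andP => gL; rewrite gL /=; apply: contra; rewrite /fq.
    case: (c j) => /eqP e; last by apply/eqP; apply: key.
    apply/eqP; apply: (@perm_inj _ (b * sg g * phi1 * a)%g).
    by rewrite permKV key // permKV.
  - move=> [x y]; apply: le_trans (cnt (b (pad0 x))).
    rewrite ler_nat; apply: subset_leq_card; apply/subsetP => g; rewrite !inE.
    case/andP => gL; rewrite gL /=; apply: contraL => /eqP e.
    rewrite key // [(b * phi1 * a)%g _]permM [(b * phi1)%g _]permM; apply/eqP => e2.
    have : phi1 (b (pad0 x)) \in Zs n by rewrite -aH e2 pad0_Zs.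
    by apply/negP; apply: h1; rewrite bH pad0_Zs.
set Sum := \sum_(a in Hs n) \sum_(b in Hs n) _.
have L0 : (0 : C) < #|L|%:R by rewrite ltr0n.
rewrite -(ler_pM2l L0).
have -> : #|L|%:R * Sum = \sum_(g in L) \sum_(a in Hs n) \sum_(b in Hs n)
     success_prob T U c out (b * sg g * phi1 * a)%g.
  rewrite -(eq_bigr _ (fun g (gL : g \in L) => step g gL)) sumr_const mulr_natl.
  by [].
rewrite exchange_big /=.
apply: (le_trans (y := \sum_(a in Hs n) \sum_(b in Hs n)
          (#|L|%:R * sqrtC p * (2 * T%:R + 1)))).
  apply: ler_sum => a aH; rewrite exchange_big /=; apply: ler_sum => b bH.
  exact: main.
rewrite !sumr_const -mulrnA.
move: (sqrtC p) (#|L|%:R : C) (2 * T%:R + 1 : C) (#|Hs n| * #|Hs n|)%N => u v z m.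
rewrite le_eqVlt; apply/orP; left; apply/eqP; rewrite -[LHS]mulr_natl.
move: (m%:R : C) => w; ring.
Qed.

End Main.

Lemma succ_le1 (C : numClosedFieldType) n W (U : nat -> op C (basis n W)) c out
   (phi : {perm bits (n + n)}) T :
  (forall i, (i <= T)%N -> unitary (U i)) -> success_prob T U c out phi <= 1.
Proof.
move=> hU; rewrite -(run_nsq c phi hU) /success_prob /nsq.
rewrite [X in _ <= X](bigID (fun s => out s \in zero_pairs phi)) /= lerDl.
by apply: sumr_ge0 => s _; rewrite exprn_ge0.
Qed.

Lemma avg_le (C : numClosedFieldType) (I : finType) (A : {set I}) (F : I -> C) (B : C) :
  0 <= B -> \sum_(i in A) F i <= #|A|%:R * B -> (\sum_(i in A) F i) / #|A|%:R <= B.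
Proof.
move=> B0 h; case: (posnP #|A|) => hA.
  by move/cards0_eq: hA => ->; rewrite big_set0 mul0r.
by rewrite ler_pdivrMr ?ltr0n // mulrC.
Qed.

Theorem lemma4 (C : numClosedFieldType) (n kappa T W : nat)
  (U : nat -> op C (basis n W)) (c : nat -> bool)
  (out : basis n W -> bits n * bits n) :
  (1 <= kappa)%N -> (kappa <= 2 ^ n)%N ->
  (forall i, (i <= T)%N -> unitary (U i)) ->
  0 < avg_success kappa T U c out ->
  avg_success kappa T U c out
    <= 2 * (T.+1)%:R * sqrtC (kappa%:R / (2 ^ n)%:R).
Proof.
move=> k1 k2 hU _; rewrite /avg_success.
have sp0 : 0 <= sqrtC (kappa%:R / (2 ^ n)%:R : C) by rewrite sqrtC_ge0 divr_ge0 ?ler0n.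
case: (posnP n) => [n0|n0].
  subst n; have -> : kappa = 1%N by apply/eqP; rewrite eqn_leq k1 k2.
  rewrite divr1 sqrtC1 mulr1.
  apply: avg_le; first by rewrite mulr_ge0 ?ler0n.
  apply: (le_trans (y := \sum_(phi in S_kappa 0 1) 1)).
    by apply: ler_sum => phi _; apply: succ_le1.
  rewrite sumr_const -mulr_natl mulr1 -[X in X <= _]mulr1.
  apply: ler_wpM2l; first by rewrite ler0n.
  by rewrite -natrM ler1n muln_gt0.
set p : C := kappa%:R / (2 ^ n)%:R.
set SK := S_kappa n kappa.
apply: avg_le; first by rewrite mulr_ge0 // mulr_ge0 ?ler0n.
have H1 : (1%g : {perm bits (n + n)}) \in Hs n by rewrite inE; apply/presP => z; rewrite perm1.
have H0 : (0 : C) < (#|Hs n| * #|Hs n|)%:R.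
  by rewrite ltr0n muln_gt0 andbb card_gt0; apply/set0Pn; exists 1%g.
rewrite -(ler_pM2l H0).
have -> : (#|Hs n| * #|Hs n|)%:R * (\sum_(phi in SK) success_prob T U c out phi) =
    \sum_(phi in SK) \sum_(a in Hs n) \sum_(b in Hs n) success_prob T U c out (b * phi * a)%g.
  rewrite exchange_big /=.
  transitivity (\sum_(a in Hs n) \sum_(b in Hs n) \sum_(phi in SK) success_prob T U c out phi).
    by rewrite !sumr_const -mulrnA mulr_natl.
  apply: eq_bigr => a aH; rewrite [RHS]exchange_big /=; apply: eq_bigr => b bH.
  rewrite (reindex_inj (h := fun phi => (b * phi * a)%g)) /=; last first.
    by move=> x y /mulIg /mulgI.
  apply: eq_bigl => phi; rewrite /SK Sk_mul //.
  - by move: aH; rewrite inE.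
  - by move: bH; rewrite inE.
apply: (le_trans (y := \sum_(phi in SK) (#|Hs n| * #|Hs n|)%:R * (sqrtC p * (2 * T%:R + 1)))).
  apply: ler_sum => phi phiS.
  have e : #|Dset phi| = kappa by move: phiS; rewrite inE card_zp => /eqP.
  by have := fixed_bound c out phi n0 hU; rewrite e.
have hB : sqrtC p * (2 * T%:R + 1) <= 2 * T.+1%:R * sqrtC p.
  rewrite mulrC; apply: ler_wpM2r => //.
  by rewrite -[T.+1]addn1 natrD mulrDr mulr1 lerD2l ler1n.
rewrite sumr_const -[X in X <= _]mulr_natl [X in _ <= X]mulrCA.
apply: ler_wpM2l; first by rewrite ler0n.
apply: ler_wpM2l => //; by rewrite ler0n.
Qed.
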